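(* Let $k\ge 1$ and let $G$ be a graph. Then $G$ is a $k$-OR-PCG, i.e. $G=\text{OR-PCG}_k(T_1,\ldots,T_k,I_1,\ldots,I_k)$ for some trees $T_1,\ldots,T_k$ with common leaf set $V(G)$ and intervals $I_1,\ldots,I_k$, if and only if there exist trees $T''_1,\ldots,T''_k$ with common leaf set $V(G)$ and a single interval $I$ of nonnegative reals such that $G=\text{OR-PCG}_k(T''_1,\ldots,T''_k,I,\ldots,I)$. The same equivalence holds with ''OR-PCG'' replaced by ''AND-PCG'' throughout.
   Context: All trees are unrooted with edges weighted by nonnegative real numbers; for leaves $u,v$ of a tree $T$, $d_T(u,v)$ is the sum of the weights on the unique path between $u$ and $v$. Given trees $T_1,\ldots,T_k$ with the same leaf set $L$ and (not necessarily disjoint) intervals $I_1,\ldots,I_k$ of nonnegative reals, $\text{OR-PCG}_k(T_1,\ldots,T_k,I_1,\ldots,I_k)$ is the graph with vertex set $L$ in which $\{u,v\}$ is an edge iff $d_{T_i}(u,v)\in I_i$ for at least one $i$; $\text{AND-PCG}_k(T_1,\ldots,T_k,I_1,\ldots,I_k)$ is the graph with vertex set $L$ in which $\{u,v\}$ is an edge iff $d_{T_i}(u,v)\in I_i$ for all $i$. A graph is a $k$-OR-PCG (resp. $k$-AND-PCG) if it equals such a graph for some choice of trees and intervals. *)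

(* Defs.v *)
From HB Require Import structures.
From mathcomp Require Import all_boot all_order all_algebra.
From mathcomp Require Import reals.
Set Implicit Arguments. Unset Strict Implicit. Unset Printing Implicit Defensive.
Import Order.TTheory GRing.Theory Num.Theory.
Local Open Scope ring_scope.

Definition upath (V : finType) (adj : rel V) (x : V) (p : seq V) : bool :=
  path adj x p && uniq (x :: p).

Definition deg (V : finType) (adj : rel V) (x : V) : nat := #|[set y | adj x y]|.

(* A finite edge-weighted unrooted tree with nonnegative real edge weights,
   whose set of leaves (vertices of degree <= 1) is identified with L via
   the injective map [leaf]. *)
Record wtree (R : realType) (L : finType) := WTree {
  node : finType;
  adj : rel node;
  wt : node -> node -> R;
  leaf : L -> node;
  adj_sym : symmetric adj;
  adj_irr : irreflexive adj;
  tree_connected : forall x y : node, connect adj x y;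
  tree_acyclic : forall (x : node) (p q : seq node),
      upath adj x p -> upath adj x q -> last x p = last x q -> p = q;
  wt_sym : forall x y, adj x y -> wt x y = wt y x;
  wt_ge0 : forall x y, adj x y -> 0 <= wt x y;
  leaf_inj : injective leaf;
  leaf_im : forall x : node, (exists l, leaf l = x) <-> (deg adj x <= 1)%N
}.

Fixpoint pweight (R : realType) (V : finType) (w : V -> V -> R) (x : V) (p : seq V) : R :=
  match p with
  | [::] => 0
  | y :: p' => w x y + pweight w y p'
  end.

(* d_T(u,v) = r : r is the weight of the (unique) path between leaves u, v. *)
Definition tdist (R : realType) (L : finType) (T : wtree R L) (u v : L) (r : R) : Prop :=
  exists p : seq (node T), upath (@adj R L T) (leaf T u) p /\
    last (leaf T u) p = leaf T v /\ pweight (@wt R L T) (leaf T u) p = r.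

Definition nonneg_itv (R : realType) (I : interval R) : Prop :=
  forall x : R, x \in I -> 0 <= x.

Definition or_pcg_edge (R : realType) (L : finType) (k : nat)
  (Ts : 'I_k -> wtree R L) (Is : 'I_k -> interval R) (u v : L) : Prop :=
  exists i : 'I_k, exists r, tdist (Ts i) u v r /\ r \in Is i.

Definition and_pcg_edge (R : realType) (L : finType) (k : nat)
  (Ts : 'I_k -> wtree R L) (Is : 'I_k -> interval R) (u v : L) : Prop :=
  forall i : 'I_k, exists r, tdist (Ts i) u v r /\ r \in Is i.

Definition graph_is (L : finType) (e : rel L) (E : L -> L -> Prop) : Prop :=
  forall u v : L, u != v -> (e u v <-> E u v).

Definition is_k_or_pcg (R : realType) (L : finType) (e : rel L) (k : nat) : Prop :=
  exists (Ts : 'I_k -> wtree R L) (Is : 'I_k -> interval R),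
    (forall i, nonneg_itv (Is i)) /\ graph_is e (or_pcg_edge Ts Is).

Definition is_k_and_pcg (R : realType) (L : finType) (e : rel L) (k : nat) : Prop :=
  exists (Ts : 'I_k -> wtree R L) (Is : 'I_k -> interval R),
    (forall i, nonneg_itv (Is i)) /\ graph_is e (and_pcg_edge Ts Is).

(* Main.v *)
Require Import Defs.
From HB Require Import structures.
From mathcomp Require Import all_boot all_order all_algebra.
From mathcomp Require Import reals ring lra.
From Stdlib Require Import ClassicalEpsilon.
Set Implicit Arguments. Unset Strict Implicit. Unset Printing Implicit Defensive.
Import Order.TTheory GRing.Theory Num.Theory.
Local Open Scope ring_scope.

Section Aux.
Variable R : realType.

Lemma exmin (P : pred R) (s : seq R) : has P s ->
  exists a, [/\ a \in s, P a & forall d, d \in s -> P d -> a <= d].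
Proof.
elim: s => // x s IH /=; case/orP => [Px|Hs].
  case: (boolP (has P s)) => [/IH [a [aS Pa Ha]]|/hasPn Hn].
    case: (leP x a) => xa.
      exists x; split => //; first by rewrite inE eqxx.
      move=> d; rewrite inE => /orP [/eqP -> //|ds Pd].
      exact: le_trans xa (Ha d ds Pd).
    exists a; split => //; first by rewrite inE aS orbT.
    move=> d; rewrite inE => /orP [/eqP -> _|ds Pd]; first exact: ltW.
    exact: Ha.
  exists x; split => //; first by rewrite inE eqxx.
  move=> d; rewrite inE => /orP [/eqP -> //|ds Pd].
  by move: (Hn d ds); rewrite Pd.
have [a [aS Pa Ha]] := IH Hs.
case: (boolP (P x)) => Px.
  case: (leP x a) => xa.
    exists x; split => //; first by rewrite inE eqxx.
    move=> d; rewrite inE => /orP [/eqP -> //|ds Pd].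
    exact: le_trans xa (Ha d ds Pd).
  exists a; split => //; first by rewrite inE aS orbT.
  move=> d; rewrite inE => /orP [/eqP -> _|ds Pd]; first exact: ltW.
  exact: Ha.
exists a; split => //; first by rewrite inE aS orbT.
move=> d; rewrite inE => /orP [/eqP -> |ds Pd]; first by rewrite (negbTE Px).
exact: Ha.
Qed.

Lemma exmax (P : pred R) (s : seq R) : has P s ->
  exists b, [/\ b \in s, P b & forall d, d \in s -> P d -> d <= b].
Proof.
move=> H.
have H' : has (fun x => P (- x)) (map -%R s).
  case/hasP: H => x xs Px; apply/hasP; exists (- x); first exact: map_f.
  by rewrite opprK.
have [a [aS Pa Ha]] := exmin H'.
exists (- a); split => //.
  case/mapP: aS => y ys ->; by rewrite opprK.
move=> d ds Pd; rewrite lerNr; apply: Ha; first exact: map_f.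
by rewrite opprK.
Qed.

Lemma exlo (s : seq R) (a : R) :
  exists lo, lo < a /\ forall d, d \in s -> d < a -> d <= lo.
Proof.
elim: s => [|x s [lo [loa Hlo]]].
  by exists (a - 1); split => //; lra.
case: (ltP x a) => xa.
  exists (Num.max lo x); split; first by rewrite gt_max loa xa.
  move=> d; rewrite inE => /orP [/eqP ->|ds da]; first by rewrite le_max lexx orbT.
  by rewrite le_max Hlo.
exists lo; split => // d; rewrite inE => /orP [/eqP -> |ds da]; last exact: Hlo.
by move=> /(le_lt_trans xa); rewrite ltxx.
Qed.

Lemma itv_conv (J : interval R) x y z : x \in J -> y \in J -> x <= z -> z <= y -> z \in J.
Proof.
case: J => bl br; rewrite !itv_boundlr => /andP [h1 _] /andP [_ h2] xz zy.
apply/andP; split.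
  by apply: le_trans h1 _; rewrite leBSide /=.
by apply: le_trans _ h2; rewrite leBSide /=.
Qed.

End Aux.
Section Sep.
Variable R : realType.

Lemma sep (s : seq R) (J : interval R) : (forall d, d \in s -> 0 <= d) ->
  exists rho : R, rho < 1 /\ forall al, rho < al -> al < 1 ->
  exists c t : R, [/\ 0 <= c, 0 <= t &
     forall d, d \in s -> (d \in J) = (c * d + t * 2 \in `[al, 1])].
Proof.
move=> s0.
case: (boolP (has (fun d => d \in J) s)) => [hJ|/hasPn hJ]; last first.
  exists 0; split => // al _ _; exists 1, 1; split => // d ds.
  rewrite (negbTE (hJ d ds)) in_itv /=; apply/esym/negbTE.
  rewrite negb_and -!ltNge; apply/orP; right; have := s0 d ds; lra.
have [a [aS aJ Ha]] := exmin hJ.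
have [b [bS bJ Hb]] := exmax hJ.
have [lo [loa Hlo]] := exlo s a.
have a0 := s0 a aS.
have ab : a <= b by apply: Ha.
have mem d : d \in s -> (d \in J) = (a <= d <= b).
  move=> ds; apply/idP/idP => [dJ|/andP [h1 h2]]; last exact: itv_conv aJ bJ h1 h2.
  by rewrite Ha // Hb.
exists ((a + lo) / (2 * b)); split.
  have [b0|] := ltP 0 b.
    rewrite ltr_pdivrMr; last lra.
    lra.
  move=> b0; have -> : b = 0 by lra.
  by rewrite mulr0 invr0 mulr0.
move=> al hal al1.
have hab : (a + lo) / 2 <= al * b.
  have [b0|b0] := ltP 0 b.
    move: hal; rewrite ltr_pdivrMr; last lra.
    lra.
  have -> : b = 0 by lra.
  rewrite mulr0; lra.
pose m := b - (a + lo) / 2.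
have m0 : 0 < m by rewrite /m; lra.
pose c := (1 - al) / m.
have cm : c * m = 1 - al by rewrite /c divfK //; apply: lt0r_neq0.
have c0 : 0 < c by rewrite /c divr_gt0 //; lra.
have cb : c * b <= 1.
  have : c * b * m <= m.
    rewrite -mulrA (mulrC b) mulrA cm.
    idtac.
    rewrite /m; lra.
  by rewrite -ler_pdivlMr // divff //; apply: lt0r_neq0.
exists c, ((1 - c * b) / 2); split; first exact: ltW.
  lra.
move=> d ds.
have -> : c * d + (1 - c * b) / 2 * 2 = 1 - c * (b - d) by field.
rewrite mem // in_itv /=.
case: (ltP d a) => da /=.
  have dlo := Hlo d ds da.
  apply/esym/negbTE; rewrite negb_and -ltNge; apply/orP; left.
  have : c * (b - lo) > c * m.
    rewrite ltr_pM2l //; rewrite /m; lra.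
  have : c * (b - d) >= c * (b - lo) by rewrite ler_pM2l //; lra.
  lra.
case: (leP d b) => db /=.
  apply/esym/andP; split.
    have : c * (b - d) <= c * m by rewrite ler_pM2l //; rewrite /m; lra.
    lra.
  have : 0 <= c * (b - d) by apply: mulr_ge0; lra.
  lra.
apply/esym/negbTE; rewrite negb_and -!ltNge; apply/orP; right.
have : c * (b - d) < 0 by rewrite pmulr_rlt0 //; lra.
lra.
Qed.
End Sep.
Section Tree.
Variable R : realType.
Variable V : finType.
Variable ad : rel V.
Hypothesis ad_sym : symmetric ad.

Lemma pweight_ge0 (w : V -> V -> R) : (forall x y, ad x y -> 0 <= w x y) ->
  forall x p, path ad x p -> 0 <= pweight w x p.
Proof.
move=> hw; move=> x p; elim: p x => [|y p IH] x //= /andP [hxy hp].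
by apply: addr_ge0; [exact: hw | exact: IH].
Qed.

Lemma interior_deg x p : path ad x p -> uniq (x :: p) ->
  forall z, z \in behead (belast x p) -> (2 <= deg ad z)%N.
Proof.
elim: p x => [|y p IH] x //= /andP [hxy hp] /andP [hx hu] z.
case: p IH hp hx hu => [|y' p'] IH hp hx hu //=.
rewrite inE => /orP [/eqP ->|hz]; last by apply: (IH y) => //.
move: hp => /= /andP [hyy' _].
have xy' : x != y' by apply: contra hx => /eqP ->; rewrite !inE eqxx orbT.
have : [set x; y'] \subset [set w | ad y w].
  apply/subsetP => w; rewrite !inE => /orP [/eqP ->|/eqP ->] //.
  by rewrite ad_sym.
by move/subset_leq_card; rewrite cards2 xy'.
Qed.

Definition lf (x : V) : R := ((deg ad x <= 1)%N)%:R.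

Definition wmod (w : V -> V -> R) (c t : R) x y := c * w x y + t * (lf x + lf y).

Lemma pw_formula (w : V -> V -> R) c t x p : p != [::] ->
  (forall z, z \in behead (belast x p) -> lf z = 0) ->
  pweight (wmod w c t) x p = c * pweight w x p + t * (lf x + lf (last x p)).
Proof.
elim: p x => [|y p IH] x // _ /= hz.
case: p IH hz => [|y' p'] IH hz.
  rewrite /= /wmod; ring.
have := IH y isT.
have -> : lf y = 0 by apply: hz; rewrite /= inE eqxx.
move=> -> /=; last by move=> z hz'; apply: hz; rewrite /= inE hz' orbT.
rewrite /wmod (_ : lf y = 0); last by apply: hz; rewrite /= inE eqxx.
ring.
Qed.

End Tree.
Section WT.
Variable R : realType.
Variable L : finType.

Lemma wmod_sym (T : wtree R L) c t x y : @adj R L T x y ->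
  wmod (@adj R L T) (@wt R L T) c t x y = wmod (@adj R L T) (@wt R L T) c t y x.
Proof. by move=> h; rewrite /wmod (wt_sym h) (addrC (lf R (@adj R L T) x)). Qed.

Lemma wmod_ge0 (T : wtree R L) (c t : R) : 0 <= c -> 0 <= t -> forall x y, @adj R L T x y ->
  0 <= wmod (@adj R L T) (@wt R L T) c t x y.
Proof.
move=> hc ht x y h; rewrite /wmod; apply: addr_ge0; apply: mulr_ge0 => //.
  exact: wt_ge0.
by apply: addr_ge0; rewrite /lf ler0n.
Qed.

Definition mkT (T : wtree R L) (c t : R) (hc : 0 <= c) (ht : 0 <= t) : wtree R L :=
  @WTree R L (node T) (@adj R L T) (wmod (@adj R L T) (@wt R L T) c t) (leaf T)
    (@adj_sym R L T) (@adj_irr R L T) (@tree_connected R L T) (@tree_acyclic R L T)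
    (@wmod_sym T c t) (@wmod_ge0 T c t hc ht) (@leaf_inj R L T) (@leaf_im R L T).

Lemma tdist_uniq (T : wtree R L) u v r1 r2 : tdist T u v r1 -> tdist T u v r2 -> r1 = r2.
Proof.
move=> [p [hp [lp <-]]] [q [hq [lq <-]]].
by rewrite (tree_acyclic hp hq) // lp lq.
Qed.

Lemma tdist_ge0 (T : wtree R L) u v r : tdist T u v r -> 0 <= r.
Proof.
move=> [p [/andP [hp _] [_ <-]]]; apply: (pweight_ge0 (@wt_ge0 R L T) hp).
Qed.

Lemma lf_leaf (T : wtree R L) u : lf R (@adj R L T) (leaf T u) = 1.
Proof.
rewrite /lf; have [h _] := leaf_im (leaf T u).
by rewrite h //; exists u.
Qed.

Lemma tdist_mkT (T : wtree R L) (c t : R) (hc : 0 <= c) (ht : 0 <= t) u v r : u != v ->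
  tdist (mkT T hc ht) u v r <-> exists d, tdist T u v d /\ r = c * d + t * 2.
Proof.
move=> uv.
have key : forall p, upath (@adj R L T) (leaf T u) p -> last (leaf T u) p = leaf T v ->
  pweight (wmod (@adj R L T) (@wt R L T) c t) (leaf T u) p =
  c * pweight (@wt R L T) (leaf T u) p + t * 2.
  move=> p /andP [hp hu] hl.
  rewrite pw_formula //.
  - by rewrite hl !lf_leaf.
  - apply/eqP => p0; move: hl; rewrite p0 /= => /leaf_inj /eqP.
    by rewrite (negbTE uv).
  move=> z hz; rewrite /lf.
  have := interior_deg (@adj_sym R L T) hp hu hz.
  by case: (deg _ z) => [|[|n]].
split.
  move=> [p [hp [hl <-]]]; exists (pweight (@wt R L T) (leaf T u) p); split.
    by exists p.
  exact: key.
move=> [d [[p [hp [hl hd]]] ->]]; exists p; split => //; split => //.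
by rewrite key // hd.
Qed.

Definition dseq (T : wtree R L) : seq R :=
  [seq d <- [seq epsilon (inhabits 0) (fun r => tdist T p.1 p.2 r) | p <- enum {: L * L}] | 0 <= d].

Lemma dseq_ge0 T d : d \in dseq T -> 0 <= d.
Proof. by rewrite mem_filter => /andP []. Qed.

Lemma dseq_mem T u v d : tdist T u v d -> d \in dseq T.
Proof.
move=> h; rewrite mem_filter (tdist_ge0 h) /=.
have -> : d = epsilon (inhabits 0) (fun r => tdist T (u, v).1 (u, v).2 r).
  apply: (tdist_uniq h); apply: (epsilon_spec (inhabits 0) (fun r => tdist T (u, v).1 (u, v).2 r)).
  by exists d.
by apply: (map_f (fun p : L * L => _)); rewrite mem_enum.
Qed.

End WT.
Section Main.
Variable R : realType.
Variable L : finType.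

Lemma foldmax (s : seq R) :
  [/\ 0 <= foldr Num.max 0 s, (forall x, x \in s -> x <= foldr Num.max 0 s) &
      (forall x, x \in s -> x < 1) -> foldr Num.max 0 s < 1].
Proof.
elim: s => [|y s [h1 h2 h3]] /=; first by split => // _; exact: ltr01.
split.
- by rewrite le_max h1 orbT.
- move=> x; rewrite inE => /orP [/eqP ->|xs]; first by rewrite le_max lexx.
  by rewrite le_max h2 ?orbT.
- move=> h; rewrite gt_max h ?inE ?eqxx // h3 // => x xs; apply: h.
  by rewrite inE xs orbT.
Qed.

Lemma normalize k (Ts : 'I_k -> wtree R L) (Is : 'I_k -> interval R) :
  exists (Ts' : 'I_k -> wtree R L) (I : interval R), nonneg_itv I /\
   forall i u v, u != v -> ((exists r, tdist (Ts i) u v r /\ r \in Is i) <->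
                            (exists r, tdist (Ts' i) u v r /\ r \in I)).
Proof.
pose Q := fun i (rho : R) => rho < 1 /\ forall al, rho < al -> al < 1 ->
  exists c t : R, [/\ 0 <= c, 0 <= t &
     forall d, d \in dseq (Ts i) -> (d \in Is i) = (c * d + t * 2 \in `[al, 1])].
have H : forall i, exists rho, Q i rho.
  by move=> i; apply: sep; apply: dseq_ge0.
pose rho i := epsilon (inhabits 0) (Q i).
have Hr : forall i, Q i (rho i) by move=> i; apply: epsilon_spec.
pose rm := foldr Num.max 0 [seq rho i | i <- enum 'I_k].
have [rm0 rmi rm1] := foldmax [seq rho i | i <- enum 'I_k].
have rhoi : forall i, rho i <= rm by move=> i; apply: rmi; apply: map_f; rewrite mem_enum.
have rmlt1 : rm < 1.
  apply: rm1 => x /mapP [i _ ->]; by case: (Hr i).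
pose al := (1 + rm) / 2.
have al1 : al < 1 by rewrite /al; lra.
have alr : forall i, rho i < al by move=> i; have := rhoi i; rewrite /al; lra.
pose W := fun i (p : R * R) => [/\ 0 <= p.1, 0 <= p.2 &
     forall d, d \in dseq (Ts i) -> (d \in Is i) = (p.1 * d + p.2 * 2 \in `[al, 1])].
have HW : forall i, exists p, W i p.
  move=> i; have [_ h] := Hr i; have [c [t [h1 h2 h3]]] := h al (alr i) al1.
  by exists (c, t); split.
pose ct i := epsilon (inhabits (0, 0)) (W i).
have Hct : forall i, W i (ct i) by move=> i; apply: epsilon_spec.
have hc : forall i, 0 <= (ct i).1 by move=> i; case: (Hct i).
have ht : forall i, 0 <= (ct i).2 by move=> i; case: (Hct i).
exists (fun i => mkT (Ts i) (hc i) (ht i)), `[al, 1]; split.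
  move=> x; rewrite in_itv /= => /andP [h _]; apply: le_trans h; have rm0' : 0 <= rm := rm0; rewrite /al; lra.
move=> i u v uv; have [_ _ key] := Hct i; split.
  move=> [r [hr rI]]; exists ((ct i).1 * r + (ct i).2 * 2); split.
    by apply/tdist_mkT => //; exists r.
  by rewrite -key // (dseq_mem hr).
move=> [r [hr rI]].
have [d [hd rE]] := proj1 (@tdist_mkT R L (Ts i) _ _ (hc i) (ht i) u v r uv) hr.
by exists d; split => //; rewrite key ?(dseq_mem hd) // -rE.
Qed.

End Main.

Theorem theorem1 (R : realType) (L : finType) (e : rel L) (k : nat) :
  symmetric e -> irreflexive e -> (1 <= k)%N ->
  (is_k_or_pcg R e k <->
     exists (Ts : 'I_k -> wtree R L) (I : interval R),
       nonneg_itv I /\ graph_is e (or_pcg_edge Ts (fun _ => I)))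
  /\
  (is_k_and_pcg R e k <->
     exists (Ts : 'I_k -> wtree R L) (I : interval R),
       nonneg_itv I /\ graph_is e (and_pcg_edge Ts (fun _ => I))).
Proof.
move=> _ _ _; split; split.
- move=> [Ts [Is [_ hG]]].
  have [Ts' [I [hI hE]]] := normalize Ts Is.
  exists Ts', I; split => // u v uv; rewrite (hG u v uv); split.
    by move=> [i hi]; exists i; apply/(hE i u v uv).
  by move=> [i hi]; exists i; apply/(hE i u v uv).
- by move=> [Ts [I [hI hG]]]; exists Ts, (fun _ => I).
- move=> [Ts [Is [_ hG]]].
  have [Ts' [I [hI hE]]] := normalize Ts Is.
  exists Ts', I; split => // u v uv; rewrite (hG u v uv); split.
    by move=> hi i; apply/(hE i u v uv).
  by move=> hi i; apply/(hE i u v uv).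
- by move=> [Ts [I [hI hG]]]; exists Ts, (fun _ => I).
Qed.
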